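(* Let $\epsilon>0$ and let $f:\mathbb N\to\mathbb R$ satisfy $f(q)\to\infty$. Then there exist an integer $\gamma>1$ and integers $L_n>1$ with $L_n\to\infty$ such that the rank-one subshift defined by $B_1=0$ and $B_{n+1}=\big((B_n1)^{\gamma}B_n\big)^{L_n}$, with $h_n$ the length of $B_n$, has complexity satisfying $$\limsup_{q\to\infty}\frac{p(q)}{q}<\frac32+\epsilon\quad\text{and}\quad p(h_n)<h_n+f(h_n)\ \text{for all } n\ge2.$$
   Context: For a sequence of finite words $B_n$ over $\{0,1\}$ in which each $B_n$ is a prefix and a subword of $B_{n+1}$, the associated subshift is the set of $x\in\{0,1\}^{\mathbb Z}$ all of whose finite subwords are subwords of some $B_n$; $p(q)$ is the number of distinct words of length $q$ occurring in elements of it. *)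

(* Defs.v *)
From HB Require Import structures.
From mathcomp Require Import all_boot all_order all_algebra.
From mathcomp Require Import all_classical all_reals all_analysis.
Set Implicit Arguments. Unset Strict Implicit. Unset Printing Implicit Defensive.

(* Words over {0,1}: seq bool, with false = 0 and true = 1. *)

Definition rank1_step (gamma L : nat) (B : seq bool) : seq bool :=
  flatten (nseq L (flatten (nseq gamma (B ++ [:: true])) ++ B)).

(* Bw gamma L n = B_n for n >= 1 (B_1 = 0, B_{n+1} = rank1_step gamma (L n) B_n);
   the index 0 is a dummy copy of B_1. *)
Fixpoint Bw (gamma : nat) (L : nat -> nat) (n : nat) : seq bool :=
  match n with
  | 0 => [:: false]
  | n'.+1 => if n' is 0 then [:: false] else rank1_step gamma (L n') (Bw gamma L n')
  end.

Definition subword (x : int -> bool) (i : int) (k : nat) : seq bool :=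
  mkseq (fun j => x (i + j%:Z)%R) k.

Definition subshift (B : nat -> seq bool) : set (int -> bool) :=
  [set x | forall (i : int) (k : nat), exists n, (1 <= n)%N /\ infix (subword x i k) (B n)].

Definition complexity (X : set (int -> bool)) (q : nat) : nat :=
  #|[set w : q.-tuple bool | `[< exists x i, X x /\ subword x i q = tval w >]]|.

(* Main.v *)
Require Import Defs.
From HB Require Import structures.
From mathcomp Require Import all_boot all_order all_algebra.
From mathcomp Require Import all_classical all_reals all_analysis.
From mathcomp Require Import zify ring lra.
Import Order.TTheory GRing.Theory Num.Theory.
Import numFieldNormedType.Exports.
Set Implicit Arguments. Unset Strict Implicit. Unset Printing Implicit Defensive.

Definition sp (b : bool) : seq bool := if b then [:: true] else [::].
Definition pw (Z : seq bool) k := flatten (nseq k Z).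
Definition win q i (Z : seq bool) := take q (drop i Z).

Lemma pwS Z k : pw Z k.+1 = Z ++ pw Z k. Proof. by []. Qed.
Lemma pwD Z a b : pw Z (a + b) = pw Z a ++ pw Z b.
Proof. by rewrite /pw nseqD flatten_cat. Qed.
Lemma size_pw Z k : size (pw Z k) = k * size Z.
Proof. elim: k => [|k IH] //=; rewrite size_cat IH; lia. Qed.

Lemma take_catl' m (A R : seq bool) : m <= size A -> take m (A ++ R) = take m A.
Proof.
move=> H; rewrite take_cat; case: ltnP => H2 //.
have -> : m = size A by lia.
by rewrite subnn take0 cats0 take_size.
Qed.

Lemma drop_catr' k (A R : seq bool) : size A <= k -> drop k (A ++ R) = drop (k - size A) R.
Proof. by move=> H; rewrite drop_cat ltnNge H. Qed.

Lemma win_catl q i (A R : seq bool) : i + q <= size A -> win q i (A ++ R) = win q i A.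
Proof.
move=> H; rewrite /win drop_cat; case: ltnP => H2.
  by rewrite take_catl' // size_drop; lia.
have -> : i = size A by lia.
have -> : q = 0 by lia.
by rewrite !take0.
Qed.

Lemma win_catr q i (A R : seq bool) : size A <= i -> win q i (A ++ R) = win q (i - size A) R.
Proof. by move=> H; rewrite /win drop_catr'. Qed.

Lemma win_mid q i (A R : seq bool) : i <= size A -> size A <= i + q ->
  win q i (A ++ R) = drop i A ++ take (q - (size A - i)) R.
Proof.
move=> H1 H2; rewrite /win drop_cat; case: ltnP => H3.
  rewrite take_cat size_drop ltnNge.
  by have -> : (size A - i <= q) = true by apply/idP; lia.
have -> : i = size A by lia.
by rewrite subnn drop_size drop0 subn0.
Qed.

Lemma pw_indep Z r q M1 M2 : r + q <= M1 * size Z -> r + q <= M2 * size Z ->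
  win q r (pw Z M1) = win q r (pw Z M2).
Proof.
wlog le12 : M1 M2 / M1 <= M2.
  move=> W H1 H2; case: (leqP M1 M2) => h; first exact: W.
  by symmetry; apply: W => //; lia.
move=> H1 H2; have -> : M2 = M1 + (M2 - M1) by lia.
by rewrite pwD win_catl // size_pw.
Qed.

Lemma pw_mod Z i q M M' : 0 < size Z -> i + q <= M * size Z ->
  (i %% size Z) + q <= M' * size Z ->
  win q i (pw Z M) = win q (i %% size Z) (pw Z M').
Proof.
move=> s0 H1 H2.
set s := size Z in s0 H1 H2 *.
have E := divn_eq i s.
set a := i %/ s in E; set r := i %% s in E H2 *.
have ltr : r < s by rewrite ltn_mod.
have aM : a <= M.
  have : a * s <= M * s by lia.
  by rewrite leq_pmul2r.
have -> : M = a + (M - a) by lia.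
rewrite pwD win_catr size_pw -/s; last by lia.
have -> : i - a * s = r by lia.
apply: pw_indep => //.
rewrite mulnBl -/s; lia.
Qed.


Definition Yw (B : seq bool) := B ++ [:: true].
Definition Xw g B := pw (Yw B) g ++ B.
Definition Cw g Lm B := pw (Xw g B) Lm.
Definition DW g Lm B := (Cw g Lm B ++ Cw g Lm B) ++ true :: (Cw g Lm B ++ Cw g Lm B).
Definition D2 g Lm B := Cw g Lm B ++ true :: Cw g Lm B ++ true :: Cw g Lm B.

Definition Per1 B q := [seq win q j (pw (Yw B) q.+1) | j <- iota 0 (size (Yw B))].
Definition Junc g B q := let P := size (Xw g B) in
  [seq win q r (pw (Xw g B) q.+2) | r <- iota (P - minn q.-1 P) (minn q.-1 P)].
Definition DefC g Lm B q := let P := size (Xw g B) in let H := size (Cw g Lm B) in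
  [seq win q (2 * H - d) (DW g Lm B) | d <- if q <= 2 * P + 2 then
       iota P.+1 (q - P.+1) ++ iota 0 (q - P.+1) else iota 0 q].
Definition Def2 g Lm B q := let H := size (Cw g Lm B) in
  [seq win q i (D2 g Lm B) | i <- iota (2 * H + 2 - q) (q - H.+1)].
Definition Sl g Lm B q := Per1 B q ++ Junc g B q ++ DefC g Lm B q ++ Def2 g Lm B q.

Lemma size_Y B : size (Yw B) = (size B).+1.
Proof. by rewrite size_cat addn1. Qed.
Lemma size_X g B : size (Xw g B) = g * (size B).+1 + size B.
Proof. by rewrite size_cat size_pw size_Y. Qed.
Lemma size_C g Lm B : size (Cw g Lm B) = Lm * size (Xw g B).
Proof. by rewrite size_pw. Qed.

Lemma XY g B : Xw g B ++ [:: true] = pw (Yw B) g.+1.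
Proof. by rewrite /Xw -catA -addn1 pwD /pw /= cats0. Qed.


Lemma Per1_in B q M i : i + q <= M * (size B).+1 ->
  win q i (pw (Yw B) M) \in Per1 B q.
Proof.
move=> H; rewrite (@pw_mod _ _ _ _ q.+1) ?size_Y //.
  apply: map_f; rewrite mem_iota add0n size_Y ltn_mod //.
have := ltn_mod i (size B).+1; rewrite mulSn; nia.
Qed.

Lemma N_in g B q K i : 0 < size B -> i + q <= K * size (Xw g B) ->
  win q i (pw (Xw g B) K) \in Per1 B q ++ Junc g B q.
Proof.
move=> hB H; set P := size (Xw g B).
have P0 : 0 < P by rewrite /P size_X; lia.
rewrite (@pw_mod _ _ _ _ q.+2) -/P //; last first.
  have := ltn_mod i P; rewrite !mulSn; nia.
set r := i %% P; have rP : r < P by rewrite ltn_mod.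
rewrite mem_cat; case: (leqP (r + q) P) => Hr.
  apply/orP; left.
  have E1 : win q r (pw (Xw g B) q.+2) = win q r (pw (Yw B) g.+1).
    rewrite pwS win_catl; last by [].
    by rewrite -XY win_catl.
  rewrite E1; apply: Per1_in; move: Hr; rewrite /P size_X mulSn; lia.
apply/orP; right; apply: map_f; rewrite mem_iota; lia.
Qed.

Lemma Def1_in g Lm B q d m : 0 < size B -> 0 < Lm -> d + m + 1 = q ->
  d <= 2 * size (Cw g Lm B) -> m <= 2 * size (Cw g Lm B) ->
  drop (2 * size (Cw g Lm B) - d) (Cw g Lm B ++ Cw g Lm B) ++
     true :: take m (Cw g Lm B ++ Cw g Lm B) \in Sl g Lm B q.
Proof.
move=> hB hL hq hd hm.
set C := Cw g Lm B; set X := Xw g B; set P := size X; set H := size C.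
have HP : H = Lm * P by rewrite /H size_C.
have hd' : d <= 2 * H := hd. have hm' : m <= 2 * H := hm. clear hd hm.
have P0 : 0 < P by rewrite /P size_X; lia.
case: (boolP ((P < d) || (P < m))) => Hc.
  have E : drop (2 * H - d) (C ++ C) ++ true :: take m (C ++ C) =
           win q (2 * H - d) (DW g Lm B).
    rewrite /DW win_mid -/C ?size_cat -/H; [|lia|lia].
    by have -> : q - (H + H - (2 * H - d)) = m.+1 by lia.
  rewrite E /Sl !mem_cat; apply/orP; right; apply/orP; right; apply/orP; left.
  rewrite /DefC -/X -/P -/C -/H; apply: map_f.
  case: ifP => _; last by rewrite mem_iota; lia.
  rewrite mem_cat !mem_iota; lia.
have hdP : d <= P by lia.
have hmP : m <= P by lia.
have hC1 : C = pw X Lm.-1 ++ X.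
  by rewrite /C /Cw -/X -{1}(prednK hL) -addn1 pwD /pw /= cats0.
have hC2 : C = X ++ pw X Lm.-1.
  by rewrite /C /Cw -/X -{1}(prednK hL).
have sz1 : size (pw X Lm.-1) + P = H.
  rewrite size_pw -/P HP -{2}(prednK hL) mulSn; lia.
have E : drop (2 * H - d) (C ++ C) ++ true :: take m (C ++ C) =
         win q (P - d) (pw (Yw B) (g.+1 + g.+1)).
  have D1 : drop (2 * H - d) (C ++ C) = drop (P - d) X.
    rewrite [X in C ++ X]hC1 catA drop_catr' ?size_cat; last by lia.
    by have -> : 2 * H - d - (H + size (pw X Lm.-1)) = P - d by lia.
  have T1 : take m (C ++ C) = take m X.
    by rewrite [X in X ++ C]hC2 -catA take_catl'.
  rewrite D1 T1 pwD -XY -/X -catA win_mid -/P; [|lia|lia].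
  have -> : q - (P - (P - d)) = m.+1 by lia.
  by rewrite /= take_catl'.
rewrite E /Sl mem_cat; apply/orP; left; apply: Per1_in.
have : P = g * (size B).+1 + size B by rewrite /P size_X.
nia.
Qed.

Lemma size_cons_ (x : bool) (s : seq bool) : size (x :: s) = (size s).+1.
Proof. by []. Qed.

Definition Ww g Lm B b b' := Cw g Lm B ++ sp b ++ Cw g Lm B ++ sp b' ++ Cw g Lm B.

Lemma NS g Lm B q K i : 0 < size B -> i + q <= K * size (Xw g B) ->
  win q i (pw (Xw g B) K) \in Sl g Lm B q.
Proof.
move=> hB H; have := N_in hB H; rewrite /Sl !mem_cat => /orP[->|->] //.
by rewrite orbT.
Qed.

Lemma CS g Lm B q i : 0 < size B -> i + q <= size (Cw g Lm B) ->
  win q i (Cw g Lm B) \in Sl g Lm B q.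
Proof. by move=> hB H; apply: NS => //; rewrite -size_C. Qed.

Lemma CCS g Lm B q i : 0 < size B -> i + q <= 2 * size (Cw g Lm B) ->
  win q i (Cw g Lm B ++ Cw g Lm B) \in Sl g Lm B q.
Proof.
move=> hB H; rewrite /Cw -pwD; apply: NS => //.
by move: H; rewrite size_C mulnDl; lia.
Qed.

Lemma Def1_gen g Lm B q i m : 0 < size B -> 0 < Lm -> i <= size (Cw g Lm B) ->
  (size (Cw g Lm B) - i) + m + 1 = q -> m <= 2 * size (Cw g Lm B) ->
  drop i (Cw g Lm B) ++ true :: take m (Cw g Lm B ++ Cw g Lm B) \in Sl g Lm B q.
Proof.
move=> hB hL hi hq hm.
have := Def1_in hB hL hq _ hm; rewrite drop_catr'; last by lia.
have -> : 2 * size (Cw g Lm B) - (size (Cw g Lm B) - i) - size (Cw g Lm B) = i by lia.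
apply; lia.
Qed.

Lemma win_cons q k x (Z : seq bool) : win q k.+1 (x :: Z) = win q k Z.
Proof. by []. Qed.

Lemma W_in g Lm B q b b' i : 0 < size B -> 0 < Lm ->
  q <= 2 * size (Cw g Lm B) + 1 -> i + q <= size (Ww g Lm B b b') ->
  win q i (Ww g Lm B b b') \in Sl g Lm B q.
Proof.
move=> hB hL hq hi.
set C := Cw g Lm B in hq hi *; set H := size C in hq *.
have HH : size (Cw g Lm B) = H by [].
have tC : forall m, m <= H -> take m C = take m (C ++ C).
  by move=> m hm; rewrite take_catl'.
case: b b' hi => [] [] hi.
-
  have EW : Ww g Lm B true true = C ++ true :: C ++ true :: C by [].
  rewrite EW in hi *; rewrite !(size_cat, size_cons_) -/H in hi.
  case: (leqP (i + q) H) => h1; first by rewrite win_catl //; exact: CS.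
  case: (leqP (H + 1) i) => h2.
    rewrite win_catr -/H; last by lia.
    have -> : i - H = (i - H - 1).+1 by lia.
    rewrite win_cons.
    have [k Ek] : exists k, k = i - H - 1 by eexists. rewrite -Ek.
    case: (leqP (k + q) H) => h3; first by rewrite win_catl //; exact: CS.
    case: (leqP (H + 1) k) => h4.
      rewrite win_catr -/H; last by lia.
      have -> : k - H = (k - H - 1).+1 by lia.
      by rewrite win_cons; apply: CS => //; lia.
    rewrite win_mid -/H; [|lia|lia].
    have -> : q - (H - k) = (q - (H - k) - 1).+1 by lia.
    rewrite /= tC; last by lia.
    apply: Def1_gen => //; lia.
  case: (leqP (i + q) (2 * H + 1)) => h3.
    rewrite win_mid -/H; [|lia|lia].
    have -> : q - (H - i) = (q - (H - i) - 1).+1 by lia.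
    rewrite /= take_catl' ?tC; [|lia|lia].
    apply: Def1_gen => //; lia.
  rewrite /Sl !mem_cat; apply/orP; right; apply/orP; right; apply/orP; right.
  rewrite /Def2 -/C -/H; apply: map_f; rewrite mem_iota; lia.
-
  have EW : Ww g Lm B true false = C ++ true :: C ++ C by [].
  rewrite EW in hi *; rewrite !(size_cat, size_cons_) -/H in hi.
  case: (leqP (i + q) H) => h1; first by rewrite win_catl //; exact: CS.
  case: (leqP (H + 1) i) => h2.
    rewrite win_catr -/H; last by lia.
    have -> : i - H = (i - H - 1).+1 by lia.
    by rewrite win_cons; apply: CCS => //; lia.
  rewrite win_mid -/H; [|lia|lia].
  have -> : q - (H - i) = (q - (H - i) - 1).+1 by lia.
  rewrite /=; apply: Def1_gen => //; lia.
-
  have EW : Ww g Lm B false true = (C ++ C) ++ true :: C by rewrite -catA.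
  rewrite EW in hi *; rewrite !(size_cat, size_cons_) -/H in hi.
  case: (leqP (i + q) (2 * H)) => h1.
    by rewrite win_catl ?size_cat -/H; [apply: CCS|]; lia.
  case: (leqP (2 * H + 1) i) => h2.
    rewrite win_catr ?size_cat -/H; last by lia.
    have -> : i - (H + H) = (i - 2 * H - 1).+1 by lia.
    by rewrite win_cons; apply: CS => //; lia.
  rewrite win_mid ?size_cat -/H; [|lia|lia].
  have -> : q - (H + H - i) = (q - (2 * H - i) - 1).+1 by lia.
  rewrite /= tC; last by lia.
  have := @Def1_in g Lm B q (2 * H - i) (q - (2 * H - i) - 1) hB hL.
  have -> : 2 * size (Cw g Lm B) - (2 * H - i) = i by rewrite -/C -/H; lia.
  apply; rewrite -/C -/H; lia.
-
  have EW : Ww g Lm B false false = pw (Xw g B) (Lm + (Lm + Lm)) by rewrite !pwD.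
  rewrite EW in hi *; apply: NS => //; move: hi; rewrite !size_pw; lia.
Qed.


Definition blk (C : seq bool) t := C ++ flatten [seq sp b ++ C | b <- t].

Lemma blk_cons C b t : blk C (b :: t) = C ++ sp b ++ blk C t.
Proof. by rewrite /blk /= -!catA. Qed.

Lemma blk_cat C t b t' : blk C t ++ sp b ++ blk C t' = blk C (t ++ b :: t').
Proof. by rewrite /blk map_cat flatten_cat /= -!catA. Qed.

Lemma size_sp b : size (sp b) = b. Proof. by case: b. Qed.

Lemma blk_win C t q i : q <= 2 * size C + 1 -> i + q <= size (blk C t) ->
  exists b b' j, win q i (blk C t) = win q j (C ++ sp b ++ C ++ sp b' ++ C) /\
     j + q <= size (C ++ sp b ++ C ++ sp b' ++ C).
Proof.
move=> hq; elim: t i => [|b t IH] i hi.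
  exists false, false, i; rewrite /blk /= cats0 in hi *.
  by split; [rewrite win_catl | rewrite !size_cat; lia].
rewrite blk_cons in hi *; rewrite [size (C ++ _)]size_cat [size (sp b ++ _)]size_cat in hi.
case: (leqP (size C + size (sp b)) i) => h1.
  rewrite catA win_catr; last by rewrite size_cat.
  apply: IH; rewrite [size (C ++ _)]size_cat; lia.
case: t {IH} hi => [|b' t] hi.
  exists b, false, i; rewrite /blk /= cats0 in hi *.
  have -> : C ++ sp b ++ C ++ sp false ++ C = (C ++ sp b ++ C) ++ (sp false ++ C)
    by rewrite -!catA.
  rewrite (@win_catl q i (C ++ sp b ++ C) (sp false ++ C)); [split => //; rewrite !size_cat; lia | rewrite !size_cat; lia].
exists b, b', i.
have -> : C ++ sp b ++ blk C (b' :: t) =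
   (C ++ sp b ++ C ++ sp b' ++ C) ++ flatten [seq sp b ++ C | b <- t].
  by rewrite blk_cons /blk -!catA.
rewrite win_catl !size_cat ?size_sp; [split=> //|]; move: h1; rewrite size_sp; lia.
Qed.


Lemma flatS (Y : seq bool) k : flatten (nseq k.+1 Y) = Y ++ flatten (nseq k Y).
Proof. by []. Qed.

Lemma step_blk C t g Lv : 0 < Lv -> exists u, rank1_step g Lv (blk C t) = blk C u.
Proof.
move=> hL.
have H1 : forall k, exists u, flatten (nseq k (blk C t ++ [:: true])) ++ blk C t = blk C u.
  elim=> [|k [u IH]]; first by exists t.
  exists (t ++ true :: u); rewrite -blk_cat -IH flatS -!catA; by [].
have [u Hu] := H1 g.
rewrite /rank1_step Hu.
case: Lv hL => [//|Lv] _; elim: Lv => [|Lv [u' IH]]; first by exists u; rewrite /= cats0.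
exists (u ++ false :: u'); rewrite -blk_cat -IH flatS; by [].
Qed.

Lemma Bw_blk g L n N : 0 < n -> n <= N -> (forall k, 0 < L k) ->
  exists t, Bw g L N = blk (Bw g L n) t.
Proof.
move=> hn hN hL; elim: N hN => [|N IH] hN; first by lia.
case: (ltnP n N.+1) => h; last first.
  have -> : N.+1 = n by lia.
  by exists [::]; rewrite /blk /= cats0.
have [t Ht] := IH (ltnSE h).
have -> : Bw g L N.+1 = rank1_step g (L N) (Bw g L N).
  by case: N {IH Ht} hN h => [|N] //=; lia.
rewrite Ht; exact: step_blk.
Qed.

Lemma Bw_C g L m : 0 < m -> Bw g L m.+1 = Cw g (L m) (Bw g L m).
Proof. by case: m. Qed.

Lemma prefix_blk C t : prefix C (blk C t).
Proof. exact: prefix_prefix. Qed.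

Lemma size_Bw g L n : (forall k, 0 < L k) -> 0 < size (Bw g L n).
Proof.
move=> hL; case: n => [|n] //; case: n => [|n] //.
have [t ->] := @Bw_blk g L 1 n.+2 erefl erefl hL.
by rewrite /blk size_cat.
Qed.

Lemma factor_in g L m n (w : seq bool) : 0 < m -> 0 < n -> (forall k, 0 < L k) ->
  size w <= 2 * size (Bw g L m.+1) + 1 -> infix w (Bw g L n) ->
  w \in Sl g (L m) (Bw g L m) (size w).
Proof.
move=> hm hn hL hq hw.
set N := maxn n m.+1.
have hwN : infix w (Bw g L N).
  have [t1 ->] := @Bw_blk g L n N hn (leq_maxl _ _) hL.
  exact: (infix_trans hw (prefixW (prefix_blk _ _))).
have [t Ht] := @Bw_blk g L m.+1 N erefl (leq_maxr _ _) hL.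
move: hwN; rewrite Ht => /infixP [s [s' Es]].
have Ew : w = win (size w) (size s) (blk (Bw g L m.+1) t).
  by rewrite Es /win drop_size_cat // take_size_cat.
have hi : size s + size w <= size (blk (Bw g L m.+1) t).
  by rewrite Es !size_cat addnA leq_addr.
have [b [b' [j [Ej hj]]]] := blk_win hq hi.
rewrite {1}Ew Ej; rewrite Bw_C // in hq hj *.
apply: (@W_in g (L m) (Bw g L m) (size w) b b' j) => //; exact: size_Bw.
Qed.

Lemma size_Sl g Lm B q : size (Sl g Lm B q) =
  (size B).+1 + minn q.-1 (size (Xw g B)) +
  (if q <= 2 * size (Xw g B) + 2 then 2 * (q - (size (Xw g B)).+1) else q) +
  (q - (size (Cw g Lm B)).+1).
Proof.
have e1 : size (Per1 B q) = (size B).+1 by rewrite /Per1 size_map size_iota size_Y.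
have e2 : size (Junc g B q) = minn q.-1 (size (Xw g B)) by rewrite /Junc size_map size_iota.
have e3 : size (DefC g Lm B q) =
  (if q <= 2 * size (Xw g B) + 2 then 2 * (q - (size (Xw g B)).+1) else q).
  rewrite /DefC size_map; case: ifP => _; rewrite ?size_cat !size_iota //; lia.
have e4 : size (Def2 g Lm B q) = q - (size (Cw g Lm B)).+1 by rewrite /Def2 size_map size_iota.
rewrite /Sl [size (_ ++ _)]size_cat e1 [size (_ ++ _)]size_cat e2 [size (_ ++ _)]size_cat e3 e4.
by rewrite !addnA.
Qed.



Lemma card_list q (P : q.-tuple bool -> Prop) (S : seq (seq bool)) :
  (forall w, P w -> tval w \in S) ->
  #|[set w : q.-tuple bool | `[< P w >]]| <= size S.
Proof.
move=> H; rewrite cardE -(size_map val).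
apply: uniq_leq_size; first by rewrite map_inj_uniq ?enum_uniq //; exact: val_inj.
move=> s /mapP [w]; rewrite mem_enum inE => /asboolP Hw ->; exact: H.
Qed.

Lemma pbound g L m q : 0 < m -> (forall k, 0 < L k) ->
  q <= 2 * size (Bw g L m.+1) + 1 ->
  complexity (subshift (Bw g L)) q <= size (Sl g (L m) (Bw g L m) q).
Proof.
move=> hm hL hq; apply: card_list => w [x [i [Hx Hw]]].
have [n [hn Hin]] := Hx i q.
rewrite -Hw.
have sz : size (subword x i q) = q by rewrite size_mkseq.
have := @factor_in g L m n (subword x i q) hm hn hL; rewrite sz; apply => //.
Qed.

Lemma ratio_bnd K h P H q : 1 <= h -> K * h <= P -> h + 1 <= P -> (3 * K + 3) * P <= H ->
  2 * h <= q -> q <= 2 * H + 1 ->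
  2 * K * (h.+1 + minn q.-1 P + (if q <= 2 * P + 2 then 2 * (q - P.+1) else q) + (q - H.+1))
   <= (3 * K + 2) * q.
Proof.
move=> h1 hKP hP hH hq1 hq2.
case: ifP => hq3.
  case: (leqP q P.+1) => hq4.
    have -> : minn q.-1 P = q.-1 by lia.
    have -> : q - P.+1 = 0 by lia.
    have -> : q - H.+1 = 0 by nia.
    nia.
  have -> : minn q.-1 P = P by lia.
  have -> : q - H.+1 = 0 by nia.
  nia.
have -> : minn q.-1 P = P by lia.
case: (leqP q H.+1) => hq4.
  have -> : q - H.+1 = 0 by lia.
  nia.
nia.
Qed.


Definition Pf g h := g * h.+1 + h.
Definition Lc K (th : nat -> nat) n h := maxn (3 * K + n + 3) (th (h + Pf K h + 1)).
Fixpoint hs K th n := match n with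
  | 0 => 1
  | n'.+1 => if n' is 0 then 1 else Lc K th n' (hs K th n') * Pf K (hs K th n') end.
Definition Ls K th n := Lc K th n (hs K th n).

Lemma hsS K th n : 0 < n -> hs K th n.+1 = Ls K th n * Pf K (hs K th n).
Proof. by case: n. Qed.

Lemma size_hs K th n : size (Bw K (Ls K th) n) = hs K th n.
Proof.
elim: n => [|n IH] //; case: n IH => [|n] IH //.
by rewrite Bw_C // size_C size_X IH (@hsS K th n.+1).
Qed.

Lemma hs_pos K th n : 0 < hs K th n.
Proof.
elim: n => [|n IH] //; case: n IH => [|n] IH //.
rewrite hsS // /Ls /Lc /Pf; rewrite muln_gt0; apply/andP; split; lia.
Qed.

Lemma hs_grow K th n : 0 < n -> hs K th n < hs K th n.+1.
Proof.
move=> hn; rewrite hsS // /Ls /Lc /Pf.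
have := hs_pos K th n; set h := hs K th n; set l := maxn _ _.
have : 1 <= l by rewrite /l; lia.
nia.
Qed.

Lemma hs_ge K th n : n <= hs K th n.+1.
Proof.
elim: n => [|n IH] //; apply: leq_ltn_trans IH _; exact: hs_grow.
Qed.

Lemma level K th q : 2 <= q -> exists m, 0 < m /\ 2 * hs K th m <= q /\ q <= 2 * hs K th m.+1 + 1.
Proof.
move=> hq.
suff : forall N, q < 2 * hs K th N.+1 -> exists m, 0 < m /\ 2 * hs K th m <= q /\ q <= 2 * hs K th m.+1 + 1.
  move=> H; apply: (H q.+1); have := hs_ge K th q.+1; lia.
elim=> [|N IH] h1; first by move: h1 => /=; lia.
case: (ltnP q (2 * hs K th N.+1)) => h2; first exact: IH.
exists N.+1; split => //; split => //; lia.
Qed.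


Lemma Ls_pos K th k : 0 < Ls K th k.
Proof. rewrite /Ls /Lc; lia. Qed.

Lemma pq_bound K th q : 1 <= K -> 2 <= q ->
  2 * K * complexity (subshift (Bw K (Ls K th))) q <= (3 * K + 2) * q.
Proof.
move=> hK hq.
have [m [hm [h1 h2]]] := level K th hq.
have hb := @pbound K (Ls K th) m q hm (Ls_pos K th).
rewrite size_hs in hb; have {}hb := hb h2.
rewrite size_Sl size_C size_X size_hs in hb.
apply: leq_trans (leq_mul (leqnn (2 * K)) hb) _.
set h := hs K th m in h1 hb *.
have hH : hs K th m.+1 = Ls K th m * (K * h.+1 + h) by rewrite hsS.
rewrite -/h in hH; rewrite -hH in hb.
set P := K * h.+1 + h in hH hb *.
apply: (@ratio_bnd K h P (Ls K th m * P) q) => //.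
- exact: hs_pos.
- rewrite /P; nia.
- rewrite /P; nia.
- rewrite leq_mul2r; apply/orP; right; rewrite /Ls /Lc; lia.
- by rewrite -hH.
Qed.


Lemma ph_bound K th m : 0 < m ->
  complexity (subshift (Bw K (Ls K th))) (hs K th m.+1) <=
  hs K th m.+1 + (hs K th m + Pf K (hs K th m) + 1).
Proof.
move=> hm.
have hb := @pbound K (Ls K th) m (hs K th m.+1) hm (Ls_pos K th).
rewrite size_hs in hb; have {}hb := hb (leq_trans (leq_addr _ _) (leq_addr 1 _)).
rewrite size_Sl size_C size_X size_hs -(hsS _ _ hm) in hb.
apply: leq_trans hb _; rewrite /Pf.
case: ifPn => hc; lia.
Qed.

Local Open Scope classical_set_scope.
Local Open Scope ring_scope.

Theorem theorem4 (R : realType) (eps : R) (f : nat -> R) :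
  0 < eps -> f @ \oo --> +oo ->
  exists (gamma : nat) (L : nat -> nat),
    (1 < gamma)%N /\
    (forall n : nat, (1 <= n)%N -> (1 < L n)%N) /\
    (fun n => (L n)%:R : R) @ \oo --> +oo /\
    let p := complexity (subshift (Bw gamma L)) in
    let h := fun n => size (Bw gamma L n) in
    (limn_esup (fun q : nat => ((p q)%:R / q%:R : R)%:E) < (3 / 2 + eps)%:E)%E /\
    (forall n : nat, (2 <= n)%N -> (p (h n))%:R < (h n)%:R + f (h n)).
Proof.
move=> he hf.
have [th Hth] : exists th : nat -> nat, forall M m, (th M <= m)%N -> M%:R < f m.
  have H : forall M : nat, exists N : nat, forall m, (N <= m)%N -> M%:R < f m.
    move=> M; have := hf; move/cvgryPgt => /(_ M%:R) [N _ HN].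
    by exists N => m hm; apply: HN.
  by have [th Hth] := choice H; exists th.
set K := (Num.truncn (eps^-1)).+2.
have K1 : (1 <= K)%N by [].
exists K, (Ls K th); split; first by [].
split; first by move=> n hn; rewrite /Ls /Lc; lia.
split.
  apply/cvgryPge => A; have := @cvgr_idn R; move/cvgryPge => /(_ A).
  apply: filterS => n /= hn; apply: le_trans hn _; rewrite ler_nat /Ls /Lc; lia.
move=> p h.
split.
  set c : R := 3 / 2 + K%:R^-1.
  have Kpos : (0 : R) < K%:R by rewrite ltr0n.
  have hpq : forall q, (2 <= q)%N -> (p q)%:R / q%:R <= c.
    move=> q hq; have := pq_bound th K1 hq; rewrite -/p => hn.
    have qpos : (0 : R) < q%:R by rewrite ltr0n; lia.
    rewrite ler_pdivrMr //.
    have hR : 2 * K%:R * (p q)%:R <= (3 * K%:R + 2) * q%:R :> R.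
      by move: hn; rewrite -(ler_nat R) !natrM natrD natrM.
    have E : c * q%:R - (p q)%:R = (K%:R^-1 / 2) * ((3 * K%:R + 2) * q%:R - 2 * K%:R * (p q)%:R).
      by rewrite /c; field; rewrite pnatr_eq0; lia.
    rewrite -subr_ge0 E; apply: mulr_ge0.
      by rewrite divr_ge0 // invr_ge0 ler0n.
    by rewrite subr_ge0.
  apply: (@le_lt_trans _ _ c%:E).
    rewrite limn_esup_lim; apply: lime_le; first exact: is_cvg_esups.
    exists 2%N => // n hn /=.
    apply: ge_ereal_sup => _ [k /= hk <-]; rewrite lee_fin; apply: hpq; move: hn; rewrite /= => hn; lia.
  rewrite lte_fin /c ltrD2l.
  rewrite -(@ltr_pM2r _ K%:R) // mulVf ?pnatr_eq0 //.
  have := Num.Theory.truncnS_gt (eps^-1); rewrite -/K => h1.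
  have h2 : eps^-1 < K%:R by apply: lt_le_trans h1 _; rewrite ler_nat /K.
  by rewrite -[X in X < _](mulfV (lt0r_neq0 he)) ltr_pM2l.
move=> n hn.
case: n hn => [//|m] hm; have {}hm : (0 < m)%N by lia.
rewrite /h size_hs.
have hb := @ph_bound K th m hm; rewrite -/p in hb.
apply: (@le_lt_trans _ _ ((hs K th m.+1 + (hs K th m + Pf K (hs K th m) + 1))%N)%:R).
  by rewrite ler_nat.
rewrite natrD ltrD2l; apply: Hth.
rewrite hsS // /Ls /Lc.
have := hs_pos K th m; set hh := hs K th m; rewrite /Pf; set l := maxn _ _.
have : (th (hh + (K * hh.+1 + hh) + 1) <= l)%N by rewrite /l; lia.
nia.
Qed.
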